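(* Let $G$ be a finite abelian group with identity $0$, and let $M$ and $N$ be matroids over $G$, both of rank $n$, such that $|E(M)|=|E(N)|=n+1<p(G)$. Assume that $|(-a+E(M))\cap E(N)|\neq n$ for all $a\in E(M)$, and that $E(M)$ is neither a progression nor a semi-progression. If $0\notin E(N)$, then $M$ is matched to $N$.
   Context: $p(G)$ denotes the smallest cardinality of a nonzero subgroup of $G$. For $a\in G$ and $X\subseteq G$, $-a+X=\{-a+x: x\in X\}$. A progression of length $k$ with difference $x$ and initial term $a$ is a set $\{a,a+x,\dots,a+(k-1)x\}$; a set $A$ is a semi-progression if $A\setminus\{a\}$ is a progression for some $a\in A$. A matroid over $G$ is a matroid $M$ whose finite ground set $E(M)$ is a subset of $G$; all matroids are assumed loopless. For matroids $M,N$ over $G$ with $r(M)=r(N)=n>0$ and bases $\mathcal{M}=\{a_1,\dots,a_n\}$ of $M$ and $\mathcal{N}=\{b_1,\dots,b_n\}$ of $N$, $\mathcal{M}$ is matched to $\mathcal{N}$ if there is a permutation $\pi\in S_n$ with $a_i+b_{\pi(i)}\notin E(M)$ for all $i$. $M$ is matched to $N$ if for every basis $\mathcal{M}$ of $M$ there exists a basis $\mathcal{N}$ of $N$ such that $\mathcal{M}$ is matched to $\mathcal{N}$. *)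

(* Defs.v *)
From HB Require Import structures.
From mathcomp Require Import all_boot all_order all_algebra.
Set Implicit Arguments. Unset Strict Implicit. Unset Printing Implicit Defensive.
Import GRing.Theory.
Local Open Scope ring_scope.

Definition is_subgroup (G : finZmodType) (H : {set G}) : bool :=
  (0 \in H) && [forall x in H, forall y in H, x - y \in H].

(* p(G): the smallest cardinality of a nonzero subgroup of G.
   If G is trivial (no nonzero subgroup) we use the default #|G|.+1. *)
Definition pG (G : finZmodType) : nat :=
  \big[minn/#|G|.+1]_(H : {set G} | is_subgroup H && (H != [set 0])) #|H|.

Definition translate (G : finZmodType) (a : G) (X : {set G}) : {set G} :=
  [set - a + x | x in X].

Definition progression (G : finZmodType) (A : {set G}) : Prop :=
  exists (a x : G) (k : nat), A = [set a + x *+ (nat_of_ord i) | i : 'I_k].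

Definition semi_progression (G : finZmodType) (A : {set G}) : Prop :=
  exists2 a, a \in A & progression (A :\ a).

Record matroid (G : finZmodType) := Matroid {
  E : {set G};
  indep : {set G} -> bool;
  indep_ground : forall A : {set G}, indep A -> A \subset E;
  indep0 : indep set0;
  indep_sub : forall A B : {set G}, B \subset A -> indep A -> indep B;
  indep_aug : forall A B : {set G}, indep A -> indep B -> (#|A| < #|B|)%N ->
                exists2 x, x \in B :\: A & indep (x |: A);
  loopless : forall x, x \in E -> indep [set x]
}.

Definition rank (G : finZmodType) (M : matroid G) : nat :=
  \max_(A : {set G} | indep M A) #|A|.

Definition basis (G : finZmodType) (M : matroid G) (B : {set G}) : bool :=
  indep M B && [forall C : {set G}, (indep M C && (B \subset C)) ==> (C == B)].

Definition basis_matched (G : finZmodType) (M : matroid G) (BM BN : {set G}) : Prop :=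
  exists f : G -> G, [/\ {in BM &, injective f}, f @: BM = BN &
                         forall a, a \in BM -> a + f a \notin E M].

Definition matched (G : finZmodType) (M N : matroid G) : Prop :=
  forall BM, basis M BM -> exists2 BN, basis N BN & basis_matched M BM BN.

(* Main.v *)
From HB Require Import structures.
Require Import Defs.
From mathcomp Require Import all_boot all_order all_algebra.
From mathcomp Require Import zify.
Definition nbr {T : finType} (adj : T -> T -> bool) (S : {set T}) : {set T} :=
  [set b | [exists a in S, adj a b]].

Lemma hall {T : finType} (k : nat) (adj : T -> T -> bool) (X : {set T}) :
  #|X| = k -> (forall S : {set T}, S \subset X -> #|S| <= #|nbr adj S|) ->
  exists f : T -> T, {in X &, injective f} /\ (forall a, a \in X -> adj a (f a)).
Proof.
elim/ltn_ind: k adj X => k IH adj X hk hH.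
case: (set_0Vmem X) => [->|[a0 a0X]].
  by exists id; split => [a b|a]; rewrite inE.
case: (boolP [exists S : {set T}, [&& S \subset X, S != set0, S != X & #|nbr adj S| <= #|S|]]).
  case/existsP=> S0 /and4P [sub nS0 nX tight].
  have lt0 : #|S0| < k by rewrite -hk; apply: proper_card; rewrite properEneq nX sub.
  have [f1 [inj1 adj1]] := IH _ lt0 adj S0 erefl (fun S sS => hH S (subset_trans sS sub)).
  pose adj2 a b := adj a b && (b \notin nbr adj S0).
  have [s0 s0S] := set0Pn _ nS0.
  have lt2 : #|X :\: S0| < k.
    rewrite -hk; apply: proper_card; rewrite properE subsetDl /=.
    by apply/subsetPn; exists s0; [exact: (subsetP sub)| rewrite inE s0S].
  have H2 : forall S : {set T}, S \subset X :\: S0 -> #|S| <= #|nbr adj2 S|.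
    move=> S sS.
    have dis : S :&: S0 = set0.
      apply/setP=> x; rewrite !inE; apply/negP=> /andP [xS xS0].
      by move: (subsetP sS x xS); rewrite inE xS0.
    have c1 := cardsUI S S0; rewrite dis cards0 addn0 in c1.
    have c2 : #|S :|: S0| <= #|nbr adj (S :|: S0)|.
      by apply: hH; rewrite subUset sub andbT; apply: subset_trans sS (subsetDl _ _).
    have c3 : nbr adj (S :|: S0) \subset nbr adj2 S :|: nbr adj S0.
      apply/subsetP=> b; rewrite inE => /exists_inP [a]; rewrite inE => /orP [aS|aS0] ab; rewrite in_setU.
        case: (boolP (b \in nbr adj S0)) => nb; first by apply/orP; right.
        by apply/orP; left; rewrite inE; apply/exists_inP; exists a => //; rewrite /adj2 ab.
      by apply/orP; right; rewrite inE; apply/exists_inP; exists a.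
    have c4 := subset_leq_card c3.
    have c5 := cardsUI (nbr adj2 S) (nbr adj S0).
    move: c1 c2 c4 c5 tight.
    move: #|S :|: S0| #|S| #|S0| #|nbr adj (S :|: S0)| #|nbr adj2 S :|: nbr adj S0|
      #|nbr adj2 S| #|nbr adj S0| #|nbr adj2 S :&: nbr adj S0|.
    clear; lia.
  have [f2 [inj2 adj2f]] := IH _ lt2 adj2 (X :\: S0) erefl H2.
  exists (fun a => if a \in S0 then f1 a else f2 a); split.
    move=> a a' aX a'X /=.
    have inN a1 : a1 \in S0 -> f1 a1 \in nbr adj S0.
      by move=> h; rewrite inE; apply/exists_inP; exists a1 => //; apply: adj1.
    have outN a1 : a1 \in X -> a1 \notin S0 -> f2 a1 \notin nbr adj S0.
      by move=> h1 h2; have := adj2f a1; rewrite inE h1 h2 => /(_ isT) /andP [].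
    case: (boolP (a \in S0)) => aS; case: (boolP (a' \in S0)) => a'S.
    - exact: inj1.
    - by move=> e; have := outN _ a'X a'S; rewrite -e inN.
    - by move=> e; have := outN _ aX aS; rewrite e inN.
    - by apply: inj2; rewrite inE ?aS ?a'S.
  move=> a aX; case: (boolP (a \in S0)) => aS; first exact: adj1.
  by have := adj2f a; rewrite inE aS aX => /(_ isT) /andP [].
move/existsPn=> nt.
have [b0 b0N] : exists b0, b0 \in nbr adj [set a0].
  apply/set0Pn; rewrite -card_gt0; apply: leq_trans (hH [set a0] _).
    by rewrite cards1.
  by rewrite sub1set.
have ab0 : adj a0 b0 by move: b0N; rewrite inE => /exists_inP [a]; rewrite inE => /eqP ->.
pose adj' a b := adj a b && (b != b0).
have lt' : #|X :\ a0| < k.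
  rewrite -hk; apply: proper_card; rewrite properE subsetDl /=.
  by apply/subsetPn; exists a0; rewrite // !inE eqxx.
have H' : forall S : {set T}, S \subset X :\ a0 -> #|S| <= #|nbr adj' S|.
  move=> S sS; case: (set_0Vmem S) => [->|[s sS0]]; first by rewrite cards0.
  have sX : S \subset X by apply: subset_trans sS (subsetDl _ _).
  have nSX : S != X.
    by apply/eqP=> e; move: (subsetP sS a0); rewrite e a0X !inE eqxx => /(_ isT).
  have nS : S != set0 by apply/set0Pn; exists s.
  have := nt S; rewrite sX nS nSX /= -ltnNge => lt.
  have c : nbr adj S \subset b0 |: nbr adj' S.
    apply/subsetP=> b; rewrite !inE => /exists_inP [a aS ab].
    case: (boolP (b == b0)) => //= nb; apply/exists_inP; exists a => //; by rewrite /adj' ab nb.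
  have := subset_leq_card c; rewrite cardsU1.
  move: lt; move: #|S| #|nbr adj S| #|nbr adj' S| (b0 \notin nbr adj' S) => x y z [] /=; clear; lia.
have [f' [inj' adjf']] := IH _ lt' adj' (X :\ a0) erefl H'.
have nb a : a \in X -> a != a0 -> f' a != b0.
  by move=> h1 h2; have := adjf' a; rewrite !inE h1 h2 => /(_ isT) /andP [].
exists (fun a => if a == a0 then b0 else f' a); split.
  move=> a a' aX a'X /=.
  case: (boolP (a == a0)) => [/eqP ->|na]; case: (boolP (a' == a0)) => [/eqP ->|na'] //.
  - by move=> e; have := nb _ a'X na'; rewrite e eqxx.
  - by move=> e; have := nb _ aX na; rewrite e eqxx.
  - by apply: inj'; rewrite !inE ?na ?na' ?aX ?a'X.
move=> a aX; case: (boolP (a == a0)) => [/eqP ->//|na].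
by have := adjf' a; rewrite !inE na aX => /(_ isT) /andP [].
Qed.

Import GRing.Theory.
Local Open Scope ring_scope.

Lemma bigmin_seq_le (I : eqType) (s : seq I) (F : I -> nat) (x : nat) j :
  j \in s -> (\big[minn/x]_(i <- s) F i <= F j)%N.
Proof.
elim: s => //= a s IH; rewrite in_cons big_cons => /orP [/eqP->|/IH h].
  exact: geq_minl.
exact: leq_trans (geq_minr _ _) h.
Qed.

Lemma pG_le {G : finZmodType} (H : {set G}) :
  is_subgroup H -> H != [set 0] -> (pG G <= #|H|)%N.
Proof.
move=> sH nH; rewrite /pG -big_filter; apply: bigmin_seq_le.
by rewrite mem_filter sH nH mem_index_enum.
Qed.

Definition shift {G : finZmodType} (Y : {set G}) (e : G) : {set G} :=
  [set y + e | y in Y].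

Lemma card_shift {G : finZmodType} (Y : {set G}) e : #|shift Y e| = #|Y|.
Proof. by rewrite card_imset //; apply: addIr. Qed.

Lemma mem_shift {G : finZmodType} (Y : {set G}) e x : (x \in shift Y e) = (x - e \in Y).
Proof.
apply/imsetP/idP => [[y yY ->]|h]; first by rewrite addrK.
by exists (x - e) => //; rewrite subrK.
Qed.

(* stabilizer argument *)
Lemma stab_big {G : finZmodType} (Y : {set G}) (d : G) :
  Y != set0 -> d != 0 -> (forall y, y \in Y -> y + d \in Y) -> (pG G <= #|Y|)%N.
Proof.
move=> /set0Pn [y0 y0Y] nd hd.
pose H := [set h : G | [forall y in Y, y + h \in Y]].
have shY h : h \in H -> forall y, y \in Y -> y - h \in Y.
  move=> /[!inE] /forall_inP hh y yY.
  have sub : shift Y h \subset Y by apply/subsetP=> z /imsetP [w wY ->]; exact: hh.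
  have eq : shift Y h = Y by apply/eqP; rewrite eqEcard sub card_shift leqnn.
  by move: yY; rewrite -{1}eq mem_shift.
have sH : is_subgroup H.
  apply/andP; split; first by rewrite inE; apply/forall_inP=> y yY; rewrite addr0.
  apply/forall_inP=> a aH; apply/forall_inP=> b bH; rewrite inE; apply/forall_inP=> y yY.
  rewrite addrA addrAC; move: aH; rewrite inE => /forall_inP; apply; exact: shY.
have dH : d \in H by rewrite inE; apply/forall_inP.
have nH : H != [set 0].
  by apply/eqP=> e; move: dH; rewrite e inE (negbTE nd).
apply: leq_trans (pG_le H sH nH) _.
have -> : #|H| = #|shift H y0| by rewrite card_shift.
apply: subset_leq_card; apply/subsetP=> z /imsetP [h hH ->].
by rewrite addrC; move: hH; rewrite inE => /forall_inP; apply.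
Qed.

Lemma ord_big {G : finZmodType} (d : G) (j : nat) :
  d != 0 -> (0 < j)%N -> d *+ j = 0 -> (pG G <= j)%N.
Proof.
move=> nd j0 dj.
pose Y := [set d *+ (nat_of_ord i) | i : 'I_j].
have : (pG G <= #|Y|)%N.
  apply: (@stab_big G Y d) => //.
    by apply/set0Pn; exists (d *+ 0); apply/imsetP; exists (Ordinal j0).
  move=> y /imsetP [i _ ->]; rewrite -mulrSr.
  case: (ltnP i.+1 j) => h; first by apply/imsetP; exists (Ordinal h).
  have -> : i.+1 = j by apply/eqP; rewrite eqn_leq h ltn_ord.
  by rewrite dj; apply/imsetP; exists (Ordinal j0).
move/leq_trans; apply; apply: leq_trans (leq_imset_card _ _) _.
by rewrite card_ord.
Qed.

Lemma mulrn_inj {G : finZmodType} (d : G) (i j : nat) :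
  d != 0 -> (i < pG G)%N -> (j < pG G)%N -> d *+ i = d *+ j -> i = j.
Proof.
move=> nd.
wlog ij : i j / (i <= j)%N.
  move=> W hi hj e; case: (leqP i j) => h; first exact: W.
  by symmetry; apply: W => //; exact: ltnW.
move=> hi hj e; apply/eqP; rewrite eqn_leq ij /=; rewrite leqNgt; apply/negP=> lt.
have : d *+ (j - i) = 0 by rewrite mulrnBr // e subrr.
have := @ord_big G d (j - i) nd; rewrite subn_gt0 => /(_ lt) h.
move/h => h1.
move: h1 hj; lia.
Qed.

Definition sums {G : finZmodType} (S T : {set G}) : {set G} :=
  [set s + t | s in S, t in T].

Lemma sumsP {G : finZmodType} (S T : {set G}) x :
  reflect (exists2 s, s \in S & exists2 t, t \in T & x = s + t) (x \in sums S T).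
Proof.
apply: (iffP imset2P) => [[s t sS tT ->]|[s sS [t tT ->]]]; first by exists s => //; exists t.
by exists s t.
Qed.

Lemma mem_sums {G : finZmodType} (S T : {set G}) s t :
  s \in S -> t \in T -> s + t \in sums S T.
Proof. by move=> sS tT; apply/sumsP; exists s => //; exists t. Qed.

Lemma sums_shift_le {G : finZmodType} (S T : {set G}) t :
  t \in T -> (#|S| <= #|sums S T|)%N.
Proof.
move=> tT; rewrite -(card_shift S t); apply: subset_leq_card.
by apply/subsetP=> x /imsetP [s sS ->]; exact: mem_sums.
Qed.

Lemma sumsC {G : finZmodType} (S T : {set G}) : sums S T = sums T S.
Proof.
apply/setP=> x; apply/sumsP/sumsP=> [[s sS [t tT ->]]|[s sS [t tT ->]]];
  by exists t => //; exists s => //; rewrite addrC.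
Qed.

Lemma sums_sub {G : finZmodType} (S T S' T' : {set G}) :
  S \subset S' -> T \subset T' -> sums S T \subset sums S' T'.
Proof.
move=> /subsetP h1 /subsetP h2; apply/subsetP=> x /sumsP [s sS [t tT ->]].
by apply: mem_sums; [apply: h1| apply: h2].
Qed.

(* Dyson e-transform *)
Lemma etrans {G : finZmodType} (S T : {set G}) (e : G) :
  let S1 := S :|: shift T e in let T1 := [set u in T | u + e \in S] in
  [/\ sums S1 T1 \subset sums S T, T1 \subset T &
      (#|S1| + #|T1| = #|S| + #|T|)%N].
Proof.
move=> S1 T1; split.
- apply/subsetP=> x /sumsP [s1 s1S [u uT1 ->]].
  move: uT1; rewrite inE => /andP [uT ueS].
  move: s1S; rewrite inE; case/orP=> [s1S|]; first exact: mem_sums.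
  rewrite mem_shift => h.
  have -> : s1 + u = (u + e) + (s1 - e) by rewrite -addrA [e + _]addrC subrK addrC.
  exact: mem_sums.
- by apply/subsetP=> u; rewrite inE => /andP [].
have h1 : shift T1 e = S :&: shift T e.
  apply/setP=> x; rewrite inE !mem_shift inE subrK.
  by rewrite andbC.
by rewrite -(card_shift T1 e) h1 cardsUI card_shift.
Qed.

Lemma kemperman {G : finZmodType} (k : nat) (T S : {set G}) :
  #|T| = k -> S != set0 -> T != set0 -> (#|sums S T| < pG G)%N ->
  (#|S| + #|T| <= #|sums S T| + 1)%N.
Proof.
elim/ltn_ind: k T S => k IH T S hk nS nT hp.
case: (leqP #|T| 1) => T1.
  have [t tT] := set0Pn _ nT.
  by apply: leq_add => //; exact: sums_shift_le tT.
have [t [t' [tT t'T ntt]]] := card_gt1P T1.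
case: (boolP [exists s in S, exists u in T, exists u' in T, s - u + u' \notin S]).
  case/exists_inP=> s sS /exists_inP [u uT /exists_inP [u' u'T h]].
  have [sub1 sub2 hc] := etrans S T (s - u).
  set S1 := S :|: _ in sub1 hc; set T1' := [set _ in _ | _] in sub1 sub2 hc.
  have uT1 : u \in T1' by rewrite inE uT addrC subrK.
  have u'T1 : u' \notin T1' by rewrite inE u'T addrC.
  have lt : (#|T1'| < #|T|)%N.
    apply: proper_card; rewrite properE sub2; apply/subsetPn; by exists u'.
  have nS1 : S1 != set0 by apply/set0Pn; exists s; rewrite inE sS.
  have nT1 : T1' != set0 by apply/set0Pn; exists u.
  have cs := subset_leq_card sub1.
  have := IH #|T1'| _ T1' S1 erefl nS1 nT1 (leq_ltn_trans cs hp).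
  rewrite -hk => /(_ lt) h2; rewrite -hc; apply: leq_trans h2 _; by rewrite leq_add2r.
move/exists_inPn=> h.
have : (pG G <= #|S|)%N.
  apply: (@stab_big G S (t' - t)) => //; first by rewrite subr_eq0 eq_sym.
  move=> y yS; move: (h y yS) => /exists_inPn /(_ t tT) /exists_inPn /(_ t' t'T).
  by rewrite negbK addrA addrAC.
move=> h1; have := leq_trans h1 (sums_shift_le S T t tT); by rewrite leqNgt hp.
Qed.

Lemma chain {G : finZmodType} (Y : {set G}) (d : G) :
  Y != set0 -> d != 0 -> (#|Y :|: shift Y d| <= #|Y| + 1)%N ->
  (#|Y :|: shift Y d| < pG G)%N -> progression (Y :|: shift Y d).
Proof.
move=> nY nd hc hp.
set Z := Y :|: shift Y d.
have [z zs zY] : exists2 z, z \in shift Y d & z \notin Y.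
  case: (boolP (shift Y d \subset Y)) => [sub|/subsetPn [z ? ?]]; last by exists z.
  have := @stab_big G Y d nY nd.
  have : (#|Y| <= #|Z|)%N by apply: subset_leq_card; apply: subsetUl.
  move=> h1 h2; suff: (pG G <= #|Y|)%N by move=> h3; have := leq_ltn_trans (leq_trans h3 h1) hp; rewrite ltnn.
  apply: h2 => y yY; apply: (subsetP sub); apply/imsetP; by exists y.
have eZ : Z = z |: Y.
  apply/eqP; rewrite eq_sym eqEcard cardsU1 zY /=; apply/andP; split; last by rewrite addnC.
  by rewrite /Z subUset subsetUl andbT sub1set inE zs orbT.
have cZ : #|Z| = #|Y|.+1 by rewrite eZ cardsU1 zY.
set m := #|Y| in cZ.
have succ y : y \in Y -> (y + d \in Y) || (y + d == z).
  move=> yY; have : y + d \in Z by rewrite /Z inE; apply/orP; right; apply/imsetP; exists y.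
  by rewrite eZ !inE orbC.
have claim y : y \in Y -> [exists j : 'I_m.+1, (0 < j)%N && (y == z - d *+ j)].
  move=> yY; apply: contraT => /existsPn hn.
  have all i : (i <= m)%N -> y + d *+ i \in Y.
    elim: i => [|i IHi] hi; first by rewrite mulr0n addr0.
    have := succ _ (IHi (ltnW hi)); rewrite -addrA -mulrSr; case/orP => // /eqP e.
    have := hn (Ordinal (hi : (i.+1 < m.+1)%N)); rewrite /= -e addrK eqxx //.
  have inj : injective (fun i : 'I_m.+1 => y + d *+ i).
    move=> i j /addrI e; apply: val_inj; apply: (@mulrn_inj G d i j nd _ _ e).
      by apply: leq_trans (ltn_ord i) _; rewrite -cZ; exact: ltnW.
    by apply: leq_trans (ltn_ord j) _; rewrite -cZ; exact: ltnW.
  have : (#|[set (y + d *+ (nat_of_ord i))%R | i : 'I_m.+1]| <= m)%N.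
    apply: subset_leq_card; apply/subsetP=> x /imsetP [i _ ->]; apply: all.
    by rewrite -ltnS ltn_ord.
  by rewrite card_imset // card_ord ltnn.
exists z, (- d), m.+1.
apply/eqP; rewrite eqEcard; apply/andP; split; last first.
  by apply: leq_trans (leq_imset_card _ _) _; rewrite card_ord cZ.
apply/subsetP=> x.
rewrite eZ !inE => /orP [/eqP ->|xY].
  by apply/imsetP; exists ord0; rewrite //= mulr0n addr0.
have /existsP [j /andP [_ /eqP ->]] := claim _ xY.
by apply/imsetP; exists j; rewrite // mulNrn.
Qed.

Lemma ap_sum {G : finZmodType} (S T : {set G}) :
  progression S -> (2 <= #|S|)%N -> T != set0 ->
  (#|sums S T| + 1 <= #|S| + #|T|)%N -> (#|sums S T| < pG G)%N ->
  progression (sums S T).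
Proof.
move=> [a [x [L eS]]] S2 nT hc hp.
have LS : (#|S| <= L)%N by rewrite eS; apply: leq_trans (leq_imset_card _ _) _; rewrite card_ord.
have nx : x != 0.
  apply/negP=> /eqP x0.
  have : S \subset [set a].
    by rewrite eS; apply/subsetP=> y /imsetP [i _ ->]; rewrite x0 mul0rn addr0 inE.
  by move/subset_leq_card; rewrite cards1; move: S2; case: #|S| => [|[|]].
case: L eS LS => [|L'] eS LS; first by move: S2; rewrite leqNgt; move: LS; case: #|S|.
have L'0 : (0 < L')%N by move: S2 LS; case: L' {eS} => //; case: #|S| => [|[|]].
set S_ := [set a + x *+ (nat_of_ord i) | i : 'I_L'].
set Y := sums S_ T.
have eST : sums S T = Y :|: shift Y x.
  apply/setP=> v; apply/idP/idP.
    case/sumsP=> s; rewrite eS => /imsetP [i _ ->] [t tT ->]; rewrite inE.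
    case: (ltnP i L') => hi.
      by apply/orP; left; apply: mem_sums => //; apply/imsetP; exists (Ordinal hi).
    have iL : nat_of_ord i = L' by apply/eqP; rewrite eqn_leq hi -ltnS ltn_ord.
    apply/orP; right; rewrite mem_shift.
    have -> : a + x *+ i + t - x = (a + x *+ L'.-1) + t.
      by rewrite iL -{1}(prednK L'0) mulrSr addrA -[_ + x + t]addrA [x + t]addrC addrA addrK.
    have hj : (L'.-1 < L')%N by rewrite ltn_predL.
    apply: mem_sums => //; apply/imsetP; by exists (Ordinal hj).
  rewrite inE; case/orP.
    case/sumsP=> s /imsetP [i _ ->] [t tT ->]; apply: mem_sums => //.
    rewrite eS; apply/imsetP; exists (widen_ord (leqnSn L') i) => //.
  rewrite mem_shift => /sumsP [s /imsetP [i _ ->] [t tT e]].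
  have -> : v = (a + x *+ i.+1) + t.
    have ev : v = (v - x) + x by rewrite subrK.
    by rewrite {1}ev e [in RHS]mulrSr addrA [LHS]addrAC [a + _ + x]addrAC.
  apply: mem_sums => //; rewrite eS; apply/imsetP.
  have hi : (i.+1 < L'.+1)%N by rewrite ltnS ltn_ord.
  by exists (Ordinal hi).
have cS : (#|S| <= #|S_| + 1)%N.
  have : S \subset (a + x *+ L') |: S_.
    rewrite eS; apply/subsetP=> y /imsetP [i _ ->]; rewrite !inE.
    case: (ltnP i L') => hi; first by apply/orP; right; apply/imsetP; exists (Ordinal hi).
    have -> : nat_of_ord i = L' by apply/eqP; rewrite eqn_leq hi -ltnS ltn_ord.
    by rewrite eqxx.
  move/subset_leq_card => h; apply: leq_trans h _; rewrite cardsU1 addnC leq_add2l; exact: leq_b1.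
have nS_ : S_ != set0 by apply/set0Pn; exists (a + x *+ 0); apply/imsetP; exists (Ordinal L'0).
have nY : Y != set0.
  have [t tT] := set0Pn _ nT; apply/set0Pn; exists (a + x *+ 0 + t); apply: mem_sums => //.
  by apply/imsetP; exists (Ordinal L'0).
have cY : (#|Y| <= #|sums S T|)%N by rewrite eST; apply: subset_leq_card; apply: subsetUl.
have K := @kemperman G _ T S_ erefl nS_ nT (leq_ltn_trans cY hp).
rewrite eST; apply: chain => //; rewrite -eST //.
have h1 := leq_trans hc (leq_add cS (leqnn #|T|)).
rewrite addnAC in h1; have h2 := leq_trans h1 (leq_add K (leqnn 1)).
by rewrite leq_add2r in h2.
Qed.

Lemma zs1 {G : zmodType} (a b c : G) : a + b - (b - c) - c = a.
Proof. by rewrite opprB addrA [a + b + c]addrAC addrK addrK. Qed.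
Lemma zs2 {G : zmodType} (v b c : G) : v - (b - c) - c + b = v.
Proof. by rewrite opprB addrA [v + c - b]addrAC addrK subrK. Qed.

Lemma zs3 {G : zmodType} (a b x : G) : b + (x - (a + b)) = x - a.
Proof. by rewrite opprD addrC -addrA subrK. Qed.

Lemma cardsU_le {T : finType} (A B : {set T}) : (#|A :|: B| <= #|A| + #|B|)%N.
Proof. by rewrite -cardsUI leq_addr. Qed.

Lemma vosper2 {G : finZmodType} (S T : {set G}) :
  (2 <= #|S|)%N -> #|T| = 2 -> (#|sums S T| + 1 = #|S| + #|T|)%N ->
  (#|sums S T| < pG G)%N -> progression (sums S T).
Proof.
move=> S2 /eqP /cards2P [t1 [t2 [nt eT]]] hc hp.
have e : sums S T = shift S t1 :|: shift (shift S t1) (t2 - t1).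
  apply/setP=> v; rewrite inE !mem_shift; apply/sumsP/orP.
    case=> s sS [t]; rewrite eT !inE => /orP [] /eqP -> ->.
      by left; rewrite addrK.
    by right; rewrite zs1.
  case=> h.
    by exists (v - t1) => //; exists t1; rewrite ?eT ?inE ?eqxx ?subrK.
  exists (v - (t2 - t1) - t1) => //; exists t2; first by rewrite eT !inE eqxx orbT.
  by rewrite zs2.
rewrite e; apply: chain.
- have [s sS] : exists s, s \in S by apply/set0Pn; rewrite -card_gt0; apply: leq_trans S2.
  by apply/set0Pn; exists (s + t1); rewrite mem_shift addrK.
- by rewrite subr_eq0 eq_sym.
- by rewrite -e card_shift; move: hc; rewrite eT cards2 nt; lia.
- by rewrite -e.
Qed.

Lemma meas_lt (a b c d N : nat) : (a < c)%N -> (b < N)%N -> (a * N + b < c * N + d)%N.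
Proof.
move=> ac bN; apply: (@leq_trans (a.+1 * N)); first by rewrite mulSn addnC ltn_add2r.
by apply: leq_trans (leq_addr _ _); rewrite leq_mul2r ac orbT.
Qed.
Lemma ar1 {u p s t x : nat} : (u + p = s + s -> u <= x -> x + 1 = s + t -> t <= s -> 1 <= p)%N.
Proof. lia. Qed.
Lemma ar2 {u p s t x y : nat} : (u + p = s + s -> u <= x -> x + 1 = s + t -> p + t <= y + 1 -> s <= y)%N.
Proof. lia. Qed.
Lemma ar3 {p t s : nat} : (p + t <= s + 1 -> 2 <= t -> p < s)%N.
Proof. lia. Qed.
Lemma ar4 {u p s t x : nat} : (u + p = s + s -> u <= x -> x + 1 = s + t -> p + t <= s + 1 -> s + 1 = p + t)%N.
Proof. lia. Qed.
Lemma ar6 {s t t' nb w n : nat} : (s + t' <= w + 1 -> t' = t.+1 -> t + nb = n -> nb < s -> n.+1 <= w)%N.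
Proof. lia. Qed.
Lemma ar7 {s t t' nb w n : nat} : (s + t' <= w + 1 -> t' = t.+1 -> t + nb = n -> nb < s -> w <= n.+1 -> s + t = n.+1)%N.
Proof. lia. Qed.
Lemma ar8 {s t n : nat} : (s + t = n.+1 -> s <= n -> 0 < t)%N.
Proof. lia. Qed.
Lemma ar5 {w i abu s t x : nat} : (w + i = abu + s -> i <= 2 -> abu + 1 = s + s -> w <= x ->
  x + 1 = s + t -> t <= s -> 3 <= t -> False)%N.
Proof. lia. Qed.

Lemma vosper {G : finZmodType} (m : nat) (S T : {set G}) :
  (#|T| * #|G|.+1 + #|S| = m)%N ->
  (2 <= #|S|)%N -> (2 <= #|T|)%N -> (#|sums S T| + 1 = #|S| + #|T|)%N ->
  (#|sums S T| < pG G)%N -> progression (sums S T).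
Proof.
elim/ltn_ind: m S T => m IH S T hm S2 T2 hc hp.
have SG : (#|S| <= #|G|)%N := max_card _.
have TG : (#|T| <= #|G|)%N := max_card _.
case: (ltnP #|S| #|T|) => ST.
  rewrite sumsC; apply: (IH (#|S| * #|G|.+1 + #|T|)%N).
  - by rewrite -hm; apply: meas_lt => //; rewrite ltnS.
  - by [].
  - exact: T2.
  - exact: S2.
  - by rewrite sumsC hc addnC.
  - by rewrite sumsC.
case: (leqP #|T| 2) => T3.
  by apply: vosper2 => //; apply/eqP; rewrite eqn_leq T3 T2.
have nT : T != set0 by rewrite -card_gt0; apply: leq_trans T2.
have nS : S != set0 by rewrite -card_gt0; apply: leq_trans S2.
case: (boolP [exists e, (1 < #|[set u in T | (u + e)%R \in S]|)%N &&
                        (#|[set u in T | (u + e)%R \in S]| < #|T|)%N]).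
  case/existsP=> e /andP [h1 h2].
  have [sub1 sub2 hc2] := etrans S T e.
  set S1 := S :|: _ in sub1 hc2; set T1 := [set _ in _ | _] in sub1 sub2 hc2 h1 h2.
  have nS1 : S1 != set0 by apply/set0Pn; have [s sS] := set0Pn _ nS; exists s; rewrite inE sS.
  have nT1 : T1 != set0 by rewrite -card_gt0; apply: ltnW.
  have hp1 := leq_ltn_trans (subset_leq_card sub1) hp.
  have K := @kemperman G _ T1 S1 erefl nS1 nT1 hp1.
  have eSS : sums S1 T1 = sums S T.
    by apply/eqP; rewrite eqEcard sub1 /= -(leq_add2r 1) hc -hc2.
  rewrite -eSS; apply: (IH (#|T1| * #|G|.+1 + #|S1|)%N) => //.
  - by rewrite -hm; apply: meas_lt => //; rewrite ltnS; exact: max_card.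
  - by apply: leq_trans S2 _; apply: subset_leq_card; apply: subsetUl.
  - by rewrite eSS hc hc2.
move/existsPn=> hnA.
set P := [set e | [forall u in T, u + e \in S]].
have hTe e : (1 < #|[set u in T | (u + e)%R \in S]|)%N -> e \in P.
  move=> h1; have := hnA e; rewrite h1 /= -leqNgt => h2.
  have sub : [set u in T | u + e \in S] \subset T by apply/subsetP=> u; rewrite inE => /andP [].
  have eT : [set u in T | u + e \in S] = T by apply/eqP; rewrite eqEcard sub h2.
  rewrite inE; apply/forall_inP=> u uT; move: uT; rewrite -{1}eT inE; by case/andP.
have KF t1 t2 : t1 \in T -> t2 \in T -> t1 != t2 ->
    shift S t1 :&: shift S t2 = shift P (t1 + t2).
  move=> t1T t2T nt; apply/setP=> x; rewrite inE !mem_shift; apply/andP/idP.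
    case=> a1 a2; apply: hTe; apply/card_gt1P; exists t1, t2; split => //.
      by rewrite inE t1T /= [t1 + t2]addrC zs3.
    by rewrite inE t2T /= zs3.
  rewrite inE => /forall_inP h; split.
    by have := h _ t2T; rewrite zs3.
  by have := h _ t1T; rewrite [t1 + t2]addrC zs3.
have [t1 [t2 [t1T t2T nt]]] := card_gt1P (leq_trans (isT : (1 < 3)%N) T3).
have cP : #|P| = #|shift P (t1 + t2)| by rewrite card_shift.
have cU : (#|shift S t1 :|: shift S t2| + #|P| = #|S| + #|S|)%N.
  by rewrite cP -KF // cardsUI !card_shift.
have sU : shift S t1 :|: shift S t2 \subset sums S T.
  by apply/subsetP=> x; rewrite inE !mem_shift => /orP [] h;
    [have := mem_sums _ _ _ _ h t1T | have := mem_sums _ _ _ _ h t2T]; rewrite subrK.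
have lU := subset_leq_card sU.
have sPT : sums P T \subset S.
  apply/subsetP=> x /sumsP [e eP [u uT ->]]; rewrite addrC.
  by move: eP; rewrite inE => /forall_inP; apply.
have P1 : (1 <= #|P|)%N := ar1 cU lU hc ST.
have nP : P != set0 by rewrite -card_gt0.
have hpP := leq_ltn_trans (leq_trans (subset_leq_card sPT) (@sums_shift_le G S T t1 t1T)) hp.
have KP := @kemperman G _ T P erefl nP nT hpP.
have lPT := subset_leq_card sPT.
case: (leqP 2 #|P|) => P2.
  have ePT : sums P T = S.
    by apply/eqP; rewrite eqEcard sPT /=; exact: ar2 cU lU hc KP.
  have prS : progression S.
    rewrite -ePT; apply: (IH (#|T| * #|G|.+1 + #|P|)%N) => //.
    - by rewrite -hm ltn_add2l; move: KP; rewrite ePT => KP; exact: ar3 KP T2.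
    - by move: KP; rewrite ePT => KP; exact: ar4 cU lU hc KP.
  by apply: ap_sum; [exact: prS | exact: S2 | exact: nT | rewrite hc | exact: hp].
have [t3 t3T] : exists t3, t3 \in T :\: [set t1; t2].
  apply/set0Pn; rewrite -card_gt0 cardsD.
  have : (#|T :&: [set t1; t2]| <= 2)%N.
    by apply: leq_trans (subset_leq_card (subsetIr _ _)) _; rewrite cards2; case: (_ != _).
  move: T3; clear; lia.
move: t3T; rewrite !inE negb_or => /andP [/andP [n31 n32] t3T].
have P1' : #|P| = 1%N by apply/eqP; rewrite eqn_leq P1 andbT -ltnS.
have n13 : t1 != t3 by rewrite eq_sym.
have n23 : t2 != t3 by rewrite eq_sym.
have i12 : #|shift S t1 :&: shift S t2| = 1%N by rewrite (KF t1 t2) // card_shift.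
have i13 : #|shift S t1 :&: shift S t3| = 1%N by rewrite (KF t1 t3) // card_shift.
have i23 : #|shift S t2 :&: shift S t3| = 1%N by rewrite (KF t2 t3) // card_shift.
have h1 := cardsUI (shift S t1 :|: shift S t2) (shift S t3).
have h2 : (#|(shift S t1 :|: shift S t2) :&: shift S t3| <= 2)%N.
  by rewrite setIUl; apply: leq_trans (cardsU_le _ _) _; rewrite i13 i23.
have h3 : (#|shift S t1 :|: shift S t2| + 1 = #|S| + #|S|)%N.
  by rewrite -i12 cardsUI !card_shift.
have sU3 : shift S t1 :|: shift S t2 :|: shift S t3 \subset sums S T.
  rewrite subUset sU /=; apply/subsetP=> x; rewrite mem_shift => h.
  by have := mem_sums _ _ _ _ h t3T; rewrite subrK.
rewrite card_shift in h1.
by case: (ar5 h1 h2 h3 (subset_leq_card sU3) hc ST T3).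
Qed.

Lemma rank_witness {G : finZmodType} (M : matroid G) :
  exists2 I, indep M I & #|I| = rank M.
Proof.
have h : (0 < #|[pred A : {set G} | indep M A]|)%N.
  by apply/card_gt0P; exists set0; rewrite inE; exact: indep0.
have [I iI eI] := @eq_bigmax_cond _ [pred A : {set G} | indep M A] (fun A => #|A|) h.
by exists I; [move: iI; rewrite inE | rewrite /rank eI].
Qed.

Lemma indep_le_rank {G : finZmodType} (M : matroid G) (A : {set G}) :
  indep M A -> (#|A| <= rank M)%N.
Proof. by move=> iA; rewrite /rank; apply: (@leq_bigmax_cond _ (indep M) (fun A => #|A|) A iA). Qed.

Lemma basis_card {G : finZmodType} (M : matroid G) (B : {set G}) :
  basis M B -> #|B| = rank M /\ B \subset E M.
Proof.
move=> /andP [iB /forallP mB]; split; last exact: indep_ground.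
apply/eqP; rewrite eqn_leq indep_le_rank //= leqNgt; apply/negP => lt.
have [I iI eI] := rank_witness M.
rewrite -eI in lt.
have [x /setDP [xI xB] ix] := indep_aug iB iI lt.
have := mB (x |: B); rewrite ix subsetUr /= => /eqP e.
by move: xB; rewrite -e setU11.
Qed.

Lemma exists_basis {G : finZmodType} (M : matroid G) :
  exists2 B, basis M B & #|B| = rank M.
Proof.
have [I iI eI] := rank_witness M.
exists I => //; apply/andP; split => //; apply/forallP=> C; apply/implyP=> /andP [iC sIC].
rewrite eq_sym eqEcard sIC /= eI; exact: indep_le_rank.
Qed.

Theorem theorem2p12 (G : finZmodType) (M N : matroid G) (n : nat) :
  (0 < n)%N ->
  rank M = n -> rank N = n ->
  #|E M| = n.+1 -> #|E N| = n.+1 -> (n.+1 < pG G)%N ->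
  (forall a, a \in E M -> #|translate a (E M) :&: E N| <> n) ->
  ~ progression (E M) -> ~ semi_progression (E M) ->
  0 \notin E N ->
  matched M N.
Proof.
move=> n0 rM rN cM cN hp htr nprog _ n0N BM bBM.
have [cBM sBM] := basis_card M BM bBM; rewrite rM in cBM.
have [BN bBN cBN] := exists_basis N; rewrite rN in cBN.
have sBN := proj2 (basis_card N BN bBN).
exists BN => //.
pose adj (a b : G) := (b \in BN) && (a + b \notin E M).
case: (boolP [forall S : {set G}, (S \subset BM) ==> (#|S| <= #|nbr adj S|)%N]).
  move/forallP=> hH.
  have [f [inj adjf]] := @hall G _ adj BM erefl (fun S sS => implyP (hH S) sS).
  exists f; split => //.
    apply/eqP; rewrite eqEcard; apply/andP; split.
      by apply/subsetP=> b /imsetP [a aB ->]; have := adjf a aB => /andP [].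
    by rewrite card_in_imset // cBM cBN.
  by move=> a aB; have := adjf a aB => /andP [].
move/forallPn=> [S]; rewrite negb_imply -ltnNge => /andP [sS lt].
exfalso.
set T := BN :\: nbr adj S.
have sumST s t : s \in S -> t \in T -> s + t \in E M.
  move=> sS' tT; move: tT; rewrite inE => /andP [tN tB].
  apply: contraR tN => h; rewrite inE; apply/exists_inP; exists s => //; by rewrite /adj tB h.
have nB : nbr adj S \subset BN.
  by apply/subsetP=> b; rewrite inE => /exists_inP [a _ /andP []].
have cT : (#|T| + #|nbr adj S| = n)%N.
  by rewrite /T cardsD (setIidPr nB) subnK ?cBN // -cBN subset_leq_card.
have sTN : T \subset E N by apply: subset_trans sBN; apply: subsetDl.
have n0T : 0 \notin T by apply: contra n0N; apply: (subsetP sTN).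
set T' := 0 |: T.
have cT' : #|T'| = #|T|.+1 by rewrite cardsU1 n0T.
have sub : sums S T' \subset E M.
  apply/subsetP=> x /sumsP [s sS' [t]]; rewrite in_setU1 => /orP [/eqP ->|tT] ->.
    by rewrite addr0; apply: (subsetP sBM); apply: (subsetP sS).
  exact: sumST.
have cS : (#|S| <= n)%N by rewrite -cBM subset_leq_card.
have nS : S != set0 by rewrite -card_gt0; apply: leq_ltn_trans lt.
have nT' : T' != set0 by apply/set0Pn; exists 0; rewrite !inE eqxx.
have csub := subset_leq_card sub.
have hpS : (#|sums S T'| < pG G)%N by apply: leq_ltn_trans csub _; rewrite cM.
have K := @kemperman G _ T' S erefl nS nT' hpS.
have eS : sums S T' = E M.
  by apply/eqP; rewrite eqEcard sub /= cM; exact: ar6 K cT' cT lt.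
have cST : (#|S| + #|T| = n.+1)%N by rewrite cM in csub; exact: ar7 K cT' cT lt csub.
case: (leqP #|S| 1) => S1.
  have /cards1P [a eSa] : #|S| == 1%N by rewrite eqn_leq S1 card_gt0.
  have aM : a \in E M by apply: (subsetP sBM); apply: (subsetP sS); rewrite eSa inE.
  apply: (htr a aM).
  set tr := translate a (E M).
  have ctr : #|tr| = n.+1 by rewrite card_imset ?cM //; apply: addrI.
  have t0 : 0 \in tr by apply/imsetP; exists a => //; rewrite addNr.
  have c1 : (#|tr :&: E N| <= n)%N.
    have : tr :&: E N \subset tr :\ 0.
      apply/subsetP=> x; rewrite !inE => /andP [xt xN]; rewrite xt andbT.
      by apply: contra n0N => /eqP <-.
    move/subset_leq_card; have := cardsD1 0 tr; rewrite t0 ctr => /eqP; rewrite eqSS => /eqP <-.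
    done.
  have c2 : T \subset tr :&: E N.
    apply/subsetP=> t tT; rewrite inE (subsetP sTN) // andbT.
    apply/imsetP; exists (a + t); last by rewrite addKr.
    by apply: sumST => //; rewrite eSa inE.
  have cTn : #|T| = n by move: cST; rewrite eSa cards1 add1n => /eqP; rewrite eqSS => /eqP.
  apply/eqP; rewrite eqn_leq c1 /= -{1}cTn; exact: subset_leq_card c2.
apply: nprog; rewrite -eS.
apply: (@vosper G _ S T' erefl S1).
- by rewrite cT' ltnS; exact: ar8 cST cS.
- by rewrite eS cM cT'; apply/eqP; rewrite addn1 addnS eqSS cST.
- by rewrite eS cM.
Qed.
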